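(* Let $(A,\mu,\alpha)$ be a commutative Hom-associative algebra, $k$ a natural number, and $D:A\to A$ a linear map commuting with $\alpha$ such that $D(ab)=D(a)\alpha^k(b)+\alpha^k(a)D(b)$ for all $a,b\in A$. Define $x\bullet y=\alpha^k(x)D(y)$. Then $(A,\bullet,\alpha^{k+1})$ is a Hom-Novikov algebra.
   Context: A Hom-associative algebra $(A,\mu,\alpha)$: linear space, bilinear $\mu(x\otimes y)=xy$, linear $\alpha$ with $\alpha(xy)=\alpha(x)\alpha(y)$ and $\alpha(x)(yz)=(xy)\alpha(z)$; commutative means $xy=yx$. A Hom-Novikov algebra $(A,\cdot,\gamma)$ is a left Hom-pre-Lie algebra, i.e. $\gamma(x\cdot y)=\gamma(x)\cdot\gamma(y)$ and $\gamma(x)\cdot(y\cdot z)-(x\cdot y)\cdot\gamma(z)=\gamma(y)\cdot(x\cdot z)-(y\cdot x)\cdot\gamma(z)$, which moreover satisfies $(x\cdot y)\cdot\gamma(z)=(x\cdot z)\cdot\gamma(y)$ for all $x,y,z$. *)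

(* Defs.v *)
From HB Require Import structures.
From mathcomp Require Import all_boot all_order all_algebra.
Set Implicit Arguments. Unset Strict Implicit. Unset Printing Implicit Defensive.
Import GRing.Theory.
Local Open Scope ring_scope.

Definition bilinear_mul (K : fieldType) (V : lmodType K) (mu : V -> V -> V) : Prop :=
  (forall a x y z, mu (a *: x + y) z = a *: mu x z + mu y z) /\
  (forall a x y z, mu x (a *: y + z) = a *: mu x y + mu x z).

Definition hom_associative (K : fieldType) (V : lmodType K)
  (mu : V -> V -> V) (alpha : {linear V -> V}) : Prop :=
  bilinear_mul mu /\
  (forall x y, alpha (mu x y) = mu (alpha x) (alpha y)) /\
  (forall x y z, mu (alpha x) (mu y z) = mu (mu x y) (alpha z)).

Definition commutative_mul (V : Type) (mu : V -> V -> V) : Prop :=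
  forall x y, mu x y = mu y x.

Definition hom_preLie (K : fieldType) (V : lmodType K)
  (m : V -> V -> V) (gamma : {linear V -> V}) : Prop :=
  bilinear_mul m /\
  (forall x y, gamma (m x y) = m (gamma x) (gamma y)) /\
  (forall x y z, m (gamma x) (m y z) - m (m x y) (gamma z)
                 = m (gamma y) (m x z) - m (m y x) (gamma z)).

Definition hom_Novikov (K : fieldType) (V : lmodType K)
  (m : V -> V -> V) (gamma : {linear V -> V}) : Prop :=
  hom_preLie m gamma /\
  (forall x y z, m (m x y) (gamma z) = m (m x z) (gamma y)).

Definition lin_iter (K : fieldType) (V : lmodType K) (f : {linear V -> V}) (n : nat) : V -> V :=
  iter n f.

Lemma lin_iter_is_linear (K : fieldType) (V : lmodType K) (f : {linear V -> V}) (n : nat) :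
  linear (lin_iter f n).
Proof.
rewrite /lin_iter; elim: n => [|n IH] a x y //=.
by rewrite IH !linearP.
Qed.

HB.instance Definition _ (K : fieldType) (V : lmodType K) (f : {linear V -> V}) (n : nat) :=
  GRing.isLinear.Build K V V *:%R (lin_iter f n) (lin_iter_is_linear f n).

(* Main.v *)
Require Import Defs.
From HB Require Import structures.
From mathcomp Require Import all_boot all_order all_algebra.
Import GRing.Theory.
Local Open Scope ring_scope.

Theorem mainTheorem11 (K : fieldType) (V : lmodType K)
  (mu : V -> V -> V) (alpha : {linear V -> V}) (k : nat) (D : {linear V -> V}) :
  hom_associative mu alpha ->
  commutative_mul mu ->
  (forall x, D (alpha x) = alpha (D x)) ->
  (forall a b, D (mu a b) = mu (D a) (lin_iter alpha k b) + mu (lin_iter alpha k a) (D b)) ->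
  hom_Novikov (fun x y => mu (lin_iter alpha k x) (D y))
              (lin_iter alpha k.+1 : {linear V -> V}).
Proof.
move=> [[bl br] [aM aA]] mC DA DM.
set beta := lin_iter alpha k.
have gE : forall x, lin_iter alpha k.+1 x = alpha (beta x) by [].
have bM : forall x y, beta (mu x y) = mu (beta x) (beta y).
  rewrite /beta /lin_iter; move: (k) => n; elim: n => [|n IH] x y //=. by rewrite IH aM.
have Db : forall x, D (beta x) = beta (D x).
  rewrite /beta /lin_iter; move: (k) => n; elim: n => [|n IH] x //=. by rewrite DA IH.
have ab : forall x, alpha (beta x) = beta (alpha x).
  by move=> x; rewrite /beta /lin_iter -iterSr.
have bl' : forall a x y, beta (a *: x + y) = a *: beta x + beta y.
  by move=> *; rewrite /beta linearP.
split; [split; [split|split]|].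
- by move=> a x y z /=; rewrite bl' bl.
- by move=> a x y z /=; rewrite linearP br.
- move=> x y /=; rewrite -/beta ?gE bM -ab DA Db; exact: aM.
- move=> x y z /=; rewrite -/beta.
  rewrite !DM !DA !Db !bM -!ab.
  have E : forall a b c, mu a (b + c) = mu a b + mu a c.
    by move=> a b c; have := br 1 a b c; rewrite !scale1r.
  rewrite !E -!aA.
  rewrite [mu (alpha (beta (beta x))) _ + _]addrC addrK.
  rewrite [mu (alpha (beta (beta y))) _ + _]addrC addrK.
  by rewrite aA (mC (beta (beta x))) -aA.
- move=> x y z /=; rewrite -/beta.
  rewrite !DA !Db !bM.
  by rewrite -aA (mC (beta (D y))) aA.
Qed.
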